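(* For every integer $k\ge 5$, $m_2^{(k-3)}(k-1,k-2)=k+1$.
   Context: For a prime power $q$ and $N\ge1$, a multiset of points in $\mathrm{PG}(N,q)$ is a map $\mathcal{K}$ from the points to $\mathbb{Z}_{\ge0}$, with $\mathcal{K}(S)=\sum_{P\in S}\mathcal{K}(P)$; its cardinality is $\mathcal{K}(\mathrm{PG}(N,q))$. Dimensions are projective (so $(N-2)$-dimensional subspaces of $\mathrm{PG}(N,q)$ are those of codimension two). For $0\le r\le N-1$ and a positive integer $w$, $m_q^{(r)}(N,w)$ is the maximum cardinality of a multiset of points in $\mathrm{PG}(N,q)$ such that every $r$-dimensional subspace has multiplicity at most $w$. *)

(* Defs.v *)
From mathcomp Require Import all_boot all_order all_algebra all_field.
Set Implicit Arguments. Unset Strict Implicit. Unset Printing Implicit Defensive.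
Import GRing.Theory.

(* Subspaces of the vector space F^(N+1) are represented canonically by
   square matrices S with <<S>> = S (MathComp's canonical row-space
   representative).  A projective subspace of projective dimension r is a
   vector subspace of rank r+1; points are the rank-1 subspaces. *)

Definition is_subsp {F : fieldType} {n : nat} (d : nat) (S : 'M[F]_n) : bool :=
  (<<S>>%MS == S) && (\rank S == d).

Definition PGpoint (F : finFieldType) (N : nat) :=
  {S : 'M[F]_(N.+1) | is_subsp 1 S}.

Definition multiset (F : finFieldType) (N : nat) := PGpoint F N -> nat.

Definition mult (F : finFieldType) (N : nat) (K : multiset F N)
    (S : 'M[F]_(N.+1)) : nat :=
  (\sum_(P : PGpoint F N | (val P <= S)%MS) K P)%N.

Definition mcard (F : finFieldType) (N : nat) (K : multiset F N) : nat :=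
  (\sum_(P : PGpoint F N) K P)%N.

Definition admissible (F : finFieldType) (N r w : nat) (K : multiset F N) :=
  forall S : 'M[F]_(N.+1), is_subsp r.+1 S -> mult K S <= w.

Definition is_m_value (F : finFieldType) (N r w m : nat) : Prop :=
  (exists K : multiset F N, admissible r w K /\ mcard K = m) /\
  (forall K : multiset F N, admissible r w K -> mcard K <= m).

(* Main.v *)
Require Import Defs.
From mathcomp Require Import all_boot all_order all_algebra all_field.
From mathcomp Require Import zify.
Set Implicit Arguments. Unset Strict Implicit. Unset Printing Implicit Defensive.
Import GRing.Theory.
Local Open Scope ring_scope.

Section Lin.
Variables (F : fieldType) (d m : nat) (v : 'I_m -> 'rV[F]_d).

Definition mspan (J : {set 'I_m}) : 'M[F]_d := (\sum_(i in J) <<v i>>)%MS.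

Lemma v_span (J : {set 'I_m}) i : i \in J -> (v i <= mspan J)%MS.
Proof. by move=> iJ; apply: (sumsmx_sup i) => //; rewrite genmxE. Qed.

Lemma span_sub (J : {set 'I_m}) n' (S : 'M[F]_(n', d)) :
  (forall i, i \in J -> (v i <= S)%MS) -> (mspan J <= S)%MS.
Proof. by move=> H; apply/sumsmx_subP => i iJ; rewrite genmxE H. Qed.

Lemma rank_span (J : {set 'I_m}) : (\rank (mspan J) <= #|J|)%N.
Proof.
rewrite /mspan.
have H : (\rank (\sum_(i in J) <<v i>>)%MS <= \sum_(i in J) \rank <<v i>>)%N.
  elim/big_ind2: _ => //=; first by rewrite mxrank0.
  move=> A a B b Ha Hb; apply: leq_trans (leq_add Ha Hb).
  exact: (leq_of_leqif (mxrank_adds_leqif A B)).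
apply: (leq_trans H); rewrite -sum1_card; apply: leq_sum => i _.
by rewrite mxrank_gen rank_leq_row.
Qed.

Lemma rank_span_ext (J J' : {set 'I_m}) :
  (\rank (mspan J') <= \rank (mspan J) + #|J' :\: J|)%N.
Proof.
have S1 : (mspan J' <= mspan J + mspan (J' :\: J))%MS.
  apply: span_sub => i iJ'; case: (boolP (i \in J)) => iJ.
    by apply: submx_trans (addsmxSl _ _); apply: v_span.
  by apply: submx_trans (addsmxSr _ _); apply: v_span; rewrite inE iJ iJ'.
apply: leq_trans (mxrankS S1) _.
apply: leq_trans (leq_of_leqif (mxrank_adds_leqif _ _)) _.
by rewrite leq_add2l rank_span.
Qed.

Lemma rank_of_rel (c : 'I_m -> F) (J : {set 'I_m}) i0 :
  (forall i, i \notin J -> c i = 0) -> i0 \in J -> c i0 != 0 ->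
  \sum_i c i *: v i = 0 -> (\rank (mspan J) < #|J|)%N.
Proof.
move=> c0 iJ nz rel.
set X := \sum_(i | i != i0) c i *: v i.
have XS : (X <= mspan (J :\ i0))%MS.
  apply: summx_sub => i ni; case: (boolP (i \in J)) => iJ'.
    by apply: scalemx_sub; apply: v_span; rewrite !inE ni iJ'.
  by rewrite c0 // scale0r sub0mx.
have vi0 : v i0 = (- (c i0)^-1) *: X.
  move: rel; rewrite (bigD1 i0) //= -/X => /eqP; rewrite addr_eq0 => /eqP e.
  by rewrite scaleNr -scalerN -e scalerA mulVf // scale1r.
have S1 : (mspan J <= mspan (J :\ i0))%MS.
  apply: span_sub => i iJ'; case: (eqVneq i i0) => [->|ne].
    by rewrite vi0 scalemx_sub.
  by apply: v_span; rewrite !inE ne iJ'.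
apply: leq_ltn_trans (mxrankS S1) _.
apply: leq_ltn_trans (rank_span _) _.
by rewrite (cardsD1 i0 J) iJ.
Qed.

Lemma span_mono (J1 J2 : {set 'I_m}) : J1 \subset J2 -> (mspan J1 <= mspan J2)%MS.
Proof. by move=> /subsetP H; apply: span_sub => i /H; apply: v_span. Qed.

Lemma rel_of_rank (J : {set 'I_m}) : (\rank (mspan J) < #|J|)%N ->
  exists c : 'I_m -> F, [/\ forall i, i \notin J -> c i = 0,
     exists i, c i != 0 & \sum_i c i *: v i = 0].
Proof.
have [b] := ubnP #|J|; elim: b J => // b IH J; rewrite ltnS => leJ lt.
have /card_gt0P [i0 iJ] : (0 < #|J|)%N by apply: leq_ltn_trans lt.
set J0 := J :\ i0.
have cJ : #|J| = #|J0|.+1 by rewrite (cardsD1 i0 J) iJ.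
case: (ltnP (\rank (mspan J0)) #|J0|) => [lt0 | ge0].
  have [|c [c0 nz rel]] := IH J0 _ lt0; first by rewrite -ltnS -cJ.
  exists c; split=> // i Hi; apply: c0; by rewrite !inE (negbTE Hi) andbF.
have sJ0 : (mspan J0 <= mspan J)%MS by apply: span_mono; apply: subsetDl.
have eqr : \rank (mspan J0) = \rank (mspan J).
  apply/eqP; rewrite eqn_leq mxrankS //=; apply: leq_trans ge0; by rewrite -ltnS -cJ.
have sJ : (mspan J <= mspan J0)%MS.
  by rewrite -(mxrank_leqif_sup sJ0).2 eqr.
have : (v i0 <= mspan J0)%MS by apply: submx_trans sJ; apply: v_span.
case/sub_sums_genmxP => u_ e.
exists (fun i => if i == i0 then -1 else if i \in J0 then u_ i 0 0 else 0); split.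
- move=> i Hi; have -> : (i == i0) = false.
    by apply/negbTE; apply: contraNneq Hi => ->.
  by rewrite !inE (negbTE Hi) andbF.
- by exists i0; rewrite eqxx oppr_eq0 oner_eq0.
rewrite (bigD1 i0) //= eqxx scaleN1r.
have -> : \sum_(i | i != i0) (if i == i0 then -1 else if i \in J0 then u_ i 0 0 else 0) *: v i
   = \sum_(i in J0) u_ i *m v i.
  rewrite big_mkcond [RHS]big_mkcond; apply: eq_bigr => i _.
  case: (eqVneq i i0) => [->|ne] /=; first by rewrite !inE eqxx.
  case: (i \in J0); last by rewrite scale0r.
  by rewrite -mul_scalar_mx -mx11_scalar.
by rewrite -e addNr.
Qed.

End Lin.

Lemma ext_subsp (F : fieldType) d (A : 'M[F]_d) t :
  (\rank A <= t <= d)%N -> exists S : 'M[F]_d, is_subsp t S && (A <= S)%MS.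
Proof.
have H : forall e, (\rank A + e <= d)%N ->
   exists B : 'M[F]_d, \rank B = (\rank A + e)%N /\ (A <= B)%MS.
  elim=> [|e IH] le; first by exists A; rewrite addn0.
  have [|B [rB AB]] := IH; first by apply: leq_trans le; rewrite leq_add2l.
  have : ~~ (1%:M <= B)%MS.
    by rewrite sub1mx /row_full rB; apply/negP => /eqP E; move: le; rewrite addnS; lia.
  case/row_subPn => i Hi; rewrite row1 in Hi.
  exists (B + (delta_mx 0 i : 'rV[F]_d))%MS; split; last by apply: submx_trans (addsmxSl _ _).
  apply/eqP; rewrite eqn_leq; apply/andP; split.
    apply: leq_trans (leq_of_leqif (mxrank_adds_leqif _ _)) _.
    by rewrite rB; have := rank_leq_row (delta_mx 0 i : 'rV[F]_d); lia.
  rewrite addnS -rB (ltn_leqif (mxrank_leqif_sup (addsmxSl _ _))).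
  by apply: contra Hi; apply: submx_trans (addsmxSr _ _).
move=> /andP [le1 le2].
have [|B [rB AB]] := H (t - \rank A)%N; first by rewrite subnKC.
exists <<B>>%MS; rewrite /is_subsp genmx_id eqxx mxrank_gen rB subnKC // eqxx /=.
by rewrite genmxE.
Qed.

Lemma sub_card (T : finType) (A B : {set T}) t :
  A \subset B -> (#|A| <= t <= #|B|)%N ->
  exists C : {set T}, [/\ A \subset C, C \subset B & #|C| = t].
Proof.
move=> AB /andP [le1 le2].
have H : forall e, (#|A| + e <= #|B|)%N ->
   exists C : {set T}, [/\ A \subset C, C \subset B & #|C| = (#|A| + e)%N].
  elim=> [|e IH] le; first by exists A; rewrite addn0.
  have [|C [AC CB cC]] := IH; first by apply: leq_trans le; rewrite leq_add2l.
  have : ~~ (B \subset C).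
    apply/negP => /subset_leq_card; rewrite cC; move: le; rewrite addnS; lia.
  case/subsetPn => x xB xC.
  exists (x |: C); split.
  - by apply: subset_trans AC (subsetUr _ _).
  - by rewrite subUset sub1set xB CB.
  by rewrite cardsU1 xC cC addnS.
have [|C [? ? cC]] := H (t - #|A|)%N; first by rewrite subnKC.
by exists C; split=> //; rewrite cC subnKC.
Qed.

Section Points.
Variables (F : finFieldType) (N : nat).

Lemma point_gen (P : PGpoint F N) (u : 'rV[F]_(N.+1)) :
  u != 0 -> (u <= val P)%MS -> val P = <<u>>%MS.
Proof.
case: P => S /andP [/eqP gS /eqP rS] /= nz uS.
have : (u == S)%MS by rewrite -(mxrank_leqif_eq uS).2 rS rank_rV nz.
by move/genmxP => ->.
Qed.

Lemma point_ex (u : 'rV[F]_(N.+1)) : u != 0 -> exists P : PGpoint F N, val P = <<u>>%MS.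
Proof.
move=> nz.
have H : is_subsp 1 <<u>>%MS by rewrite /is_subsp genmx_id eqxx /= mxrank_gen rank_rV nz.
by exists (exist (fun S => is_subsp 1 S) _ H).
Qed.

Lemma sum_points (u : 'rV[F]_(N.+1)) (S : 'M[F]_(N.+1)) : u != 0 ->
  (\sum_(P : PGpoint F N | (val P <= S)%MS) ((u <= val P)%MS : nat))%N = (u <= S)%MS.
Proof.
move=> nz; have [Pu Pue] := point_ex nz.
rewrite big_mkcond (bigD1 Pu) //= big1 ?addn0.
  by rewrite Pue !genmxE submx_refl; case: (u <= S)%MS.
move=> P nP; case: ifP => // _; case: (boolP (u <= val P)%MS) => // uP.
by case/eqP: nP; apply: val_inj; rewrite /= (point_gen nz uP) Pue.
Qed.

Definition Kof m (w : 'I_m -> 'rV[F]_(N.+1)) : multiset F N :=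
  fun P => (\sum_i ((w i <= val P)%MS : nat))%N.

Lemma card_setsum m (p : pred 'I_m) : #|[set i | p i]| = (\sum_i (p i : nat))%N.
Proof.
rewrite -sum1_card big_mkcond; apply: eq_bigr => i _; rewrite inE; by case: (p i).
Qed.

Lemma mult_Kof m (w : 'I_m -> 'rV[F]_(N.+1)) S : (forall i, w i != 0) ->
  mult (Kof w) S = #|[set i | (w i <= S)%MS]|.
Proof.
move=> nz; rewrite card_setsum /mult /Kof exchange_big /=.
by apply: eq_bigr => i _; rewrite sum_points.
Qed.

Lemma mcard_Kof m (w : 'I_m -> 'rV[F]_(N.+1)) : (forall i, w i != 0) ->
  mcard (Kof w) = m.
Proof.
move=> nz; have := mult_Kof 1%:M nz.
rewrite /mult /mcard (eq_bigl xpredT); last by move=> P; rewrite submx1.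
move=> ->; rewrite -[RHS]card_ord -cardsT; apply: eq_card => i; by rewrite !inE submx1.
Qed.

Definition pv (P : PGpoint F N) : 'rV[F]_(N.+1) := nz_row (val P).

Lemma pv_nz P : pv P != 0.
Proof.
rewrite /pv nz_row_eq0; case: P => S /andP [_ /eqP rS] /=.
by rewrite -mxrank_eq0 rS.
Qed.

Lemma pv_le P (S : 'M[F]_(N.+1)) : (val P <= S)%MS = (pv P <= S)%MS.
Proof. by rewrite {1}(point_gen (pv_nz P) (nz_row_sub _)) genmxE. Qed.

Lemma seq_of (K : multiset F N) : exists s : seq (PGpoint F N),
  forall a : pred (PGpoint F N), count a s = (\sum_(P | a P) K P)%N.
Proof.
exists (flatten [seq nseq (K P) P | P <- enum {: PGpoint F N}]) => a.
rewrite count_flatten -map_comp sumnE big_map big_enum /= big_mkcond.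
rewrite [RHS]big_mkcond; apply: eq_bigr => P _; rewrite /= count_nseq; by case: (a P); rewrite ?mul1n ?mul0n.
Qed.

Lemma count_nth (T : Type) (x0 : T) (a : pred T) (t : seq T) M :
  (M <= size t)%N -> (\sum_(i < M) (a (nth x0 t i) : nat) <= count a t)%N.
Proof.
elim: t M => [|x t IH] [|M] //= le; rewrite ?big_ord0 //.
rewrite big_ord_recl /=; apply: leq_add => //; exact: IH.
Qed.

Lemma upper_vectors (K : multiset F N) M : (M <= mcard K)%N ->
  exists w : 'I_M -> 'rV[F]_(N.+1), forall S,
    (#|[set i | (w i <= S)%MS]| <= mult K S)%N.
Proof.
move=> le; have [s Hs] := seq_of K.
have sz : size s = mcard K by rewrite -count_predT Hs.
exists (fun i => nth 0 (map pv s) i) => S.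
rewrite card_setsum /mult -Hs.
have -> : count (fun P => (val P <= S)%MS) s = count (fun x => (x <= S)%MS) (map pv s).
  by rewrite count_map; apply: eq_count => P; rewrite /= pv_le.
by apply: count_nth; rewrite size_map sz.
Qed.

End Points.

Lemma F2cases (x : 'F_2) : x = 0 \/ x = 1.
Proof.
have H : (nat_of_ord x < 2)%N := ltn_ord x.
move: H.
case E: (nat_of_ord x) => [|[|//]] _; [left|right]; by apply: val_inj.
Qed.

Lemma F2fact (x y : 'F_2) : ((x != 0%R) + (y != 0%R) + ((x + y)%R != 0%R) <= 2)%N.
Proof.
have h2 : (1 + 1 : 'F_2) = 0 by apply: val_inj.
by case: (F2cases x) => ->; case: (F2cases y) => ->; rewrite ?h2 ?addr0 ?add0r ?eqxx ?oner_eq0.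
Qed.

Definition frame (F : fieldType) p (i : 'I_(p.+4.+2)) : 'rV[F]_(p.+4.+1) :=
  \row_(j < p.+4.+1) (if (i < p.+4.+1)%N then ((i : nat) == j)%:R else 1).

Lemma ord_dec p (i : 'I_(p.+4.+2)) : i = ord_max \/ exists j : 'I_(p.+4.+1), i = widen_ord (leqnSn _) j.
Proof.
case: (ltnP i p.+4.+1) => H; [right; exists (Ordinal H); exact: val_inj|].
left; apply: val_inj => /=; have := ltn_ord i; lia.
Qed.

Lemma frame_nz (F : fieldType) p (i : 'I_(p.+4.+2)) : @frame F p i != 0.
Proof.
case: (ord_dec i) => [->|[j ->]]; apply/eqP => /matrixP.
  by move=> /(_ 0 0); rewrite !mxE /= ltnn => /eqP; rewrite oner_eq0.
by move=> /(_ 0 j); rewrite !mxE /= ltn_ord eqxx => /eqP; rewrite oner_eq0.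
Qed.

Lemma frame_rel (F : fieldType) p (c : 'I_(p.+4.+2) -> F) :
  \sum_i c i *: @frame F p i = 0 -> (exists i, c i != 0) -> forall i, c i != 0.
Proof.
move=> rel [i0 nz].
have E : forall j : 'I_(p.+4.+1), c (widen_ord (leqnSn _) j) = - c ord_max.
  move=> j.
  have : \sum_i c i * (if (i < p.+4.+1)%N then ((i : nat) == j)%:R else 1) = 0.
    move/matrixP/(_ 0 j): rel; rewrite summxE mxE => e; rewrite -[RHS]e.
    by apply: eq_bigr => i _; rewrite !mxE.
  rewrite big_ord_recr /= ltnn mulr1 (bigD1 j) //= ltn_ord eqxx mulr1 big1 ?addr0.
    by move/eqP; rewrite addr_eq0 => /eqP.
  by move=> i ne; rewrite ltn_ord (inj_eq val_inj) (negbTE ne) mulr0.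
have cm : c ord_max != 0.
  apply: contra nz => /eqP cm0; case: (ord_dec i0) => [->|[j ->]]; by rewrite ?E cm0 ?oppr0.
by move=> i; case: (ord_dec i) => [->|[j ->]]; rewrite ?E ?oppr_eq0.
Qed.

Lemma lower p : admissible p.+2 p.+3 (Kof (F := 'F_2) (N := p.+4) (@frame 'F_2 p)).
Proof.
move=> S /andP [_ /eqP rS].
rewrite mult_Kof; last exact: frame_nz.
rewrite leqNgt; apply/negP => big.
set J := [set i | (@frame 'F_2 p i <= S)%MS].
have [C [_ /subsetP CJ cC]] := sub_card (A := set0) (B := J) (t := p.+4) (sub0set J)
   (ltac:(by rewrite cards0)).
have rC : (\rank (mspan (@frame 'F_2 p) C) < #|C|)%N.
  have : (mspan (@frame 'F_2 p) C <= S)%MS.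
    by apply: span_sub => i /CJ; rewrite inE.
  by move/mxrankS; rewrite rS cC.
have [c [c0 [i0 nz] rel]] := rel_of_rank rC.
have allc := frame_rel rel (ex_intro _ i0 nz).
have CT : C = setT.
  apply/setP => i; rewrite inE; apply/negPn/negP => iC.
  by move: (allc i); rewrite c0 ?eqxx.
by move: cC; rewrite CT cardsT card_ord; lia.
Qed.

Lemma upper p (K : multiset 'F_2 p.+4) : admissible p.+2 p.+3 K -> (mcard K <= p.+4.+2)%N.
Proof.
move=> adm; rewrite leqNgt; apply/negP => big.
have [w Hw] := upper_vectors (M := p.+4.+3) big.
have H : forall J : {set 'I_(p.+4.+3)}, #|J| = p.+4 -> (p.+4 <= \rank (mspan w J))%N.
  move=> J cJ; rewrite leqNgt; apply/negP => lt.
  have hr : (\rank (mspan w J) <= p.+3 <= p.+4.+1)%N.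
    apply/andP. split. exact: lt. lia.
  have [S /andP [sS JS]] := ext_subsp hr.
  have h1 := adm S sS. have h2 := Hw S.
  have : (#|J| <= #|[set i | (w i <= S)%MS]|)%N.
    apply: subset_leq_card; apply/subsetP => i iJ; rewrite inE.
    exact: submx_trans (v_span w iJ) JS.
  lia.
have W : forall c : 'I_(p.+4.+3) -> 'F_2, \sum_i c i *: w i = 0 -> (exists i, c i != 0) ->
    (p.+4.+1 <= #|[set i | c i != 0%R]|)%N.
  move=> c rel [i0 nz]; set J := [set i | c i != 0%R]; rewrite leqNgt; apply/negP => lt.
  have rJ : (\rank (mspan w J) < #|J|)%N.
    apply: (rank_of_rel (c := c) (i0 := i0)) => //; last by rewrite inE.
    by move=> i; rewrite inE negbK => /eqP.
  have hc : (#|J| <= p.+4 <= #|[set: 'I_(p.+4.+3)]|)%N.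
    rewrite cardsT card_ord; apply/andP; split; lia.
  have [C [JC _ cC]] := sub_card (subsetT J) hc.
  have h1 := rank_span_ext w J C. have h2 := H C cC.
  have h3 : #|C :\: J| = (#|C| - #|J|)%N by rewrite cardsD (setIidPr JC).
  have h4 : (#|J| <= #|C|)%N by apply: subset_leq_card.
  rewrite h3 cC in h1; clear hc h3 h4; lia.
have [|a [_ [i0 na] ra]] := rel_of_rank (v := w) (J := setT).
  by rewrite cardsT card_ord; apply: leq_ltn_trans (rank_leq_col _) _.
have [|b [b0 [i1 nb] rb]] := rel_of_rank (v := w) (J := setT :\ i0).
  have : #|[set: 'I_(p.+4.+3)]| = ((i0 \in [set: 'I_(p.+4.+3)]) + #|setT :\ i0|)%N by apply: cardsD1.
  rewrite cardsT card_ord in_setT add1n => -[<-].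
  by apply: leq_ltn_trans (rank_leq_col _) _.
have bi0 : b i0 = 0 by apply: b0; rewrite !inE eqxx.
have rc : \sum_i (a i + b i) *: w i = 0.
  under eq_bigr do rewrite scalerDl.
  by rewrite big_split /= ra rb addr0.
have Wa : (p.+4 < #|[set i | a i != 0%R]|)%N := W a ra (ex_intro _ i0 na).
have Wb : (p.+4 < #|[set i | b i != 0%R]|)%N := W b rb (ex_intro _ i1 nb).
have nc : a i0 + b i0 != 0 by rewrite bi0 addr0.
have Wc : (p.+4 < #|[set i | (a i + b i)%R != 0%R]|)%N := W (fun i => a i + b i) rc (ex_intro _ i0 nc).
have : (#|[set i | a i != 0%R]| + #|[set i | b i != 0%R]| + #|[set i | (a i + b i)%R != 0%R]|
        <= 2 * p.+4.+3)%N.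
  rewrite (card_setsum (fun i => a i != 0)) (card_setsum (fun i => b i != 0)) (card_setsum (fun i => a i + b i != 0)) -!big_split /=.
  apply: (@leq_trans (\sum_(i < p.+4.+3) 2)%N); first by apply: leq_sum => i _; apply: F2fact.
  by rewrite sum_nat_const card_ord mulnC.
lia.
Qed.

Local Close Scope ring_scope.

Theorem mainTheorem13 (k : nat) (hk : 5 <= k) :
  is_m_value ('F_2 : finFieldType) (k - 1) (k - 3) (k - 2) (k + 1).
Proof.
have [p ->] : exists p, k = p.+4.+1 by exists (k - 5); lia.
have -> : p.+4.+1 - 1 = p.+4 by [].
have -> : p.+4.+1 - 3 = p.+2 by [].
have -> : p.+4.+1 - 2 = p.+3 by [].
have -> : p.+4.+1 + 1 = p.+4.+2 by rewrite addn1.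
split.
  exists (Kof (@frame 'F_2 p)); split; first exact: lower.
  by apply: mcard_Kof => i; apply: frame_nz.
exact: upper.
Qed.
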